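(* Let $0<a<1$ and, for each integer $n\ge0$, write $(T_a(z))^n=\sum_{m=0}^\infty a_{m,n}z^m$ for $z\in\mathbb D$. Then for every $\alpha>0$ there exists $\rho>0$ (depending on $a$ and $\alpha$) such that for all integers $m,n\ge0$: $$|a_{m,n}|\le e^{-\alpha(\rho n-m)}.$$
   Context: $T_a(z)=\frac{a+z}{1+\bar a z}$ for $a\in\mathbb D$, an automorphism of the unit disk $\mathbb D$. *)

(* Defs.v *)
From Stdlib Require Export Reals.
From Coquelicot Require Export Coquelicot.
Open Scope R_scope.

Definition T_aut (a z : Complex.C) : Complex.C :=
  Cdiv (Cplus a z) (Cplus (RtoC 1) (Cmult (Cconj a) z)).

Definition power_series_on_disk (c : nat -> Complex.C) (f : Complex.C -> Complex.C) : Prop :=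
  forall z : Complex.C, Cmod z < 1 ->
    is_series (fun m => Cmult (c m) (Cpow z m)) (f z).

(* Main.v *)
Require Import Defs.
From Stdlib Require Import Reals.
From Coquelicot Require Import Coquelicot.
Open Scope R_scope.
From Stdlib Require Import Lra Lia Psatz.

Fixpoint fsum (g : nat -> C) (N : nat) : C :=
  match N with O => RtoC 0 | S N' => Cplus (fsum g N') (g N') end.

Definition cis (x : R) : C := (cos x, sin x).

Lemma cis_pow x j : Cpow (cis x) j = cis (INR j * x).
Proof.
  induction j.
  - unfold cis; simpl INR. rewrite Rmult_0_l, cos_0, sin_0. reflexivity.
  - rewrite Cpow_S, IHj. unfold cis, Cmult. simpl fst; simpl snd.
    rewrite S_INR. replace ((INR j + 1) * x) with (x + INR j * x) by ring.
    rewrite cos_plus, sin_plus. f_equal; ring.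
Qed.

Lemma Cmod_cis x : Cmod (cis x) = 1.
Proof.
  unfold Cmod, cis; simpl fst; simpl snd.
  replace (cos x ^ 2 + sin x ^ 2) with 1. apply sqrt_1.
  rewrite <- (sin2_cos2 x). unfold Rsqr. ring.
Qed.

Lemma cos_ne_1 x : 0 < x -> x < 2 * PI -> cos x <> 1.
Proof.
  intros h1 h2 H.
  assert (Hs : sin x = 0).
  { pose proof (sin2_cos2 x) as E. rewrite H in E. unfold Rsqr in E. nra. }
  destruct (sin_eq_O_2PI_0 x) as [E|[E|E]]; try lra; auto.
  subst. rewrite cos_PI in H. lra.
Qed.

Definition om (N : nat) : C := cis (2 * PI / INR N).

Lemma om_pow_N N : (0 < N)%nat -> Cpow (om N) N = RtoC 1.
Proof.
  intro hN. unfold om. rewrite cis_pow.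
  assert (0 < INR N) by (apply lt_0_INR; lia).
  replace (INR N * (2 * PI / INR N)) with (2 * PI) by (field; lra).
  unfold cis. rewrite cos_2PI, sin_2PI. reflexivity.
Qed.

Lemma om_pow_ne1 N s : (0 < s)%nat -> (s < N)%nat -> Cpow (om N) s <> RtoC 1.
Proof.
  intros h1 h2 H. unfold om in H. rewrite cis_pow in H.
  apply (f_equal fst) in H. unfold cis in H. simpl in H.
  assert (0 < INR N) by (apply lt_0_INR; lia).
  assert (0 < INR s) by (apply lt_0_INR; lia).
  assert (INR s < INR N) by (apply lt_INR; lia).
  revert H. apply cos_ne_1.
  - pose proof PI_RGT_0. apply Rmult_lt_0_compat; [lra|].
    apply Rdiv_lt_0_compat; lra.
  - pose proof PI_RGT_0.
    replace (INR s * (2 * PI / INR N)) with ((2 * PI) * (INR s / INR N)) by (field; lra).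
    rewrite <- (Rmult_1_r (2 * PI)) at 2. apply Rmult_lt_compat_l; [lra|].
    apply (Rmult_lt_reg_r (INR N)); [lra|]. field_simplify; lra.
Qed.

Lemma Cmod_om_pow N j : Cmod (Cpow (om N) j) = 1.
Proof. unfold om. rewrite cis_pow. apply Cmod_cis. Qed.

Lemma geom_fsum u N : ((u - 1) * fsum (fun j => Cpow u j) N = Cpow u N - 1)%C.
Proof.
  induction N; simpl fsum.
  - simpl. ring.
  - rewrite Cmult_plus_distr_l, IHN. rewrite Cpow_S. ring.
Qed.

Lemma geom_zero u N : Cpow u N = RtoC 1 -> u <> RtoC 1 -> fsum (fun j => Cpow u j) N = RtoC 0.
Proof.
  intros h1 h2.
  assert (hu : (u - 1)%C <> RtoC 0).
  { intro E. apply h2. rewrite <- (Cplus_0_r u).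
    replace (RtoC 0) with (Cplus (Copp 1) 1) by ring.
    rewrite Cplus_assoc. change (Cplus u (Copp 1)) with (Cminus u 1). rewrite E. ring. }
  pose proof (geom_fsum u N) as E. rewrite h1 in E.
  replace (fsum (fun j => Cpow u j) N) with (Cmult (Cinv (u - 1)) ((u - 1) * fsum (fun j => Cpow u j) N)).
  rewrite E. ring.
  rewrite Cmult_assoc, Cinv_l by exact hu. ring.
Qed.

Lemma fsum_ext g h N : (forall j, (j < N)%nat -> g j = h j) -> fsum g N = fsum h N.
Proof.
  induction N; intros H; simpl; auto.
  rewrite IHN, H; auto.
Qed.

Lemma fsum_const N : fsum (fun _ => RtoC 1) N = RtoC (INR N).
Proof.
  induction N; simpl fsum. reflexivity.
  rewrite IHN, S_INR, <- RtoC_plus. reflexivity.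
Qed.

Lemma fsum_scal x g N : fsum (fun j => Cmult x (g j)) N = Cmult x (fsum g N).
Proof.
  induction N; simpl fsum. ring. rewrite IHN. ring.
Qed.

Lemma fsum_norm g N B : (forall j, (j < N)%nat -> Cmod (g j) <= B) -> Cmod (fsum g N) <= INR N * B.
Proof.
  induction N; intros H; simpl fsum.
  - rewrite Cmod_0. simpl. lra.
  - eapply Rle_trans. apply Cmod_triangle. rewrite S_INR.
    assert (Cmod (fsum g N) <= INR N * B) by (apply IHN; auto).
    assert (Cmod (g N) <= B) by auto. lra.
Qed.

Lemma is_series_zeroC : is_series (fun _ : nat => RtoC 0) (RtoC 0).
Proof.
  unfold is_series.
  apply filterlim_ext with (fun _ => RtoC 0).
  - intro n. induction n. rewrite sum_O. reflexivity.
    rewrite sum_Sn, <- IHn. change (RtoC 0 = Cplus (RtoC 0) (RtoC 0)). ring.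
  - apply filterlim_const.
Qed.

Lemma is_series_fsum (A : nat -> nat -> C) (L : nat -> C) N :
  (forall j, (j < N)%nat -> is_series (A j) (L j)) ->
  is_series (fun k => fsum (fun j => A j k) N) (fsum L N).
Proof.
  induction N; intros H; simpl fsum.
  - apply is_series_zeroC.
  - apply (is_series_plus (fun k => fsum (fun j => A j k) N) (A N)).
    apply IHN; auto. apply H; auto.
Qed.

Lemma is_series_mulr (a : nat -> C) l u : is_series a l -> is_series (fun k => Cmult (a k) u) (Cmult l u).
Proof.
  intro H. apply (is_series_scal u) in H.
  replace (Cmult l u) with (scal u l) by (change (Cmult u l = Cmult l u); ring).
  eapply is_series_ext; [|exact H].
  intro n. simpl. change (Cmult u (a n) = Cmult (a n) u). ring.
Qed.

Lemma series_terms_bounded (a : nat -> C) l : is_series a l ->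
  exists K0, forall k, (K0 <= k)%nat -> Cmod (a k) <= 1.
Proof.
  intro H. unfold is_series in H.
  assert (He : 0 < /4) by lra.
  specialize (H _ (locally_ball l (mkposreal _ He))).
  destruct H as [N HN].
  exists (S N). intros k hk. destruct k as [|k]; [lia|].
  pose proof (HN (S k) ltac:(lia)) as H1.
  pose proof (HN k ltac:(lia)) as H2.
  apply C_NormedModule_mixin_compat2 in H1.
  apply C_NormedModule_mixin_compat2 in H2.
  simpl in H1, H2.
  rewrite sum_Sn in H1.
  set (P := sum_n a k) in *.
  assert (E : a (S k) = Cminus (Cminus (plus P (a (S k))) l) (Cminus P l)).
  { change (a (S k) = Cminus (Cminus (Cplus P (a (S k))) l) (Cminus P l)). ring. }
  rewrite E. unfold Cminus at 1. eapply Rle_trans. apply Cmod_triangle.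
  rewrite Cmod_opp.
  unfold minus in H1, H2. change (Cmod (Cminus (plus P (a (S k))) l) < sqrt 2 * / 4) in H1.
  change (Cmod (Cminus P l) < sqrt 2 * / 4) in H2.
  assert (sqrt 2 < 2).
  { rewrite <- (sqrt_square 2) at 2 by lra. apply sqrt_lt_1; lra. }
  lra.
Qed.

Lemma powle1 t j : 0 <= t <= 1 -> t ^ j <= 1.
Proof. intro h. rewrite <- (pow1 j). apply pow_incr. lra. Qed.

Lemma cauchy_est (c : nat -> C) (f : C -> C) (hf : power_series_on_disk c f)
  (r M : R) (hr0 : 0 < r) (hr1 : r < 1)
  (hM : forall z, Cmod z = r -> Cmod (f z) <= M) (m : nat) :
  Cmod (c m) * r ^ m <= M.
Proof.
  apply Rle_plus_epsilon. intros δ hδ.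
  set (t := sqrt (sqrt r)).
  assert (hs0 : 0 < sqrt r) by (apply sqrt_lt_R0; lra).
  assert (hs1 : sqrt r < 1) by (rewrite <- sqrt_1; apply sqrt_lt_1; lra).
  assert (ht0 : 0 < t) by (apply sqrt_lt_R0; lra).
  assert (ht1 : t < 1) by (unfold t; rewrite <- sqrt_1; apply sqrt_lt_1; lra).
  assert (htt : t * t = sqrt r) by (apply sqrt_sqrt; lra).
  assert (hrr : sqrt r * sqrt r = r) by (apply sqrt_sqrt; lra).
  assert (Hser : is_series (fun k => Cmult (c k) (Cpow (RtoC (t*t)) k)) (f (RtoC (t*t)))).
  { apply hf. rewrite Cmod_R, Rabs_pos_eq; nra. }
  destruct (series_terms_bounded _ _ Hser) as [K0 HK0].
  destruct (pow_lt_1_zero t ltac:(rewrite Rabs_pos_eq; lra) (δ * (1 - t) / 2))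
    as [N0 HN0].
  { apply Rdiv_lt_0_compat; nra. }
  set (N := S (N0 + K0 + m)).
  assert (hNm : (m < N)%nat) by (unfold N; lia).
  assert (hINR : 1 <= INR N).
  { replace 1 with (INR 1) by reflexivity. apply le_INR. unfold N; lia. }
  assert (HtN : t ^ N < δ * (1 - t) / 2).
  { specialize (HN0 N ltac:(unfold N; lia)). rewrite Rabs_pos_eq in HN0; auto.
    apply pow_le; lra. }
  assert (Hterm : forall k, (N <= k)%nat -> Cmod (c k) * r ^ k <= t ^ N * t ^ k).
  { intros k hk.
    specialize (HK0 k ltac:(unfold N in hk; lia)).
    rewrite Cmod_mult, Cmod_pow, Cmod_R, Rabs_pos_eq in HK0 by nra.
    replace (r ^ k) with ((t * t) ^ k * (t*t)^k)
      by (rewrite <- Rpow_mult_distr; f_equal; nra).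
    assert (0 <= Cmod (c k)) by apply Cmod_ge_0.
    assert (0 <= (t*t)^k) by (apply pow_le; nra).
    apply Rle_trans with ((t*t)^k).
    { nra. }
    rewrite Rpow_mult_distr. apply Rmult_le_compat_r. apply pow_le; lra.
    replace k with (N + (k - N))%nat by lia. rewrite pow_add.
    rewrite <- (Rmult_1_r (t^N)) at 2. apply Rmult_le_compat_l. apply pow_le; lra.
    apply powle1; lra. }
  set (w := om N).
  set (d := fun k => fsum (fun j => Cmult (Cmult (c k) (Cpow (Cmult (RtoC r) (Cpow w j)) k))
                                        (Cpow w (j * (N - m)))) N).
  set (T := fsum (fun j => Cmult (f (Cmult (RtoC r) (Cpow w j))) (Cpow w (j * (N - m)))) N).
  assert (Hmodz : forall j, Cmod (Cmult (RtoC r) (Cpow w j)) = r).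
  { intro j. rewrite Cmod_mult, Cmod_R, Rabs_pos_eq by lra. unfold w.
    rewrite Cmod_om_pow. ring. }
  assert (HT : is_series d T).
  { unfold d, T.
    apply (is_series_fsum (fun j k => Cmult (Cmult (c k) (Cpow (Cmult (RtoC r) (Cpow w j)) k))
                                        (Cpow w (j * (N - m))))).
    intros j _. apply is_series_mulr. apply hf. rewrite Hmodz. lra. }
  set (G := fun k => fsum (fun j => Cpow (Cpow w (k + (N - m))) j) N).
  assert (Hd : forall k, d k = Cmult (Cmult (c k) (Cpow (RtoC r) k)) (G k)).
  { intro k. unfold d, G. rewrite <- fsum_scal. apply fsum_ext. intros j _.
    rewrite Cpow_mult_l. rewrite <- (Cpow_mult_r w j k).
    rewrite <- (Cpow_mult_r w (k + (N-m)) j).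
    replace ((k + (N - m)) * j)%nat with (j*k + j*(N-m))%nat by ring.
    rewrite Cpow_add_r. ring. }
  assert (HwN : Cpow w N = RtoC 1) by (apply om_pow_N; lia).
  assert (HGm : G m = RtoC (INR N)).
  { unfold G. replace (m + (N - m))%nat with N by lia. rewrite HwN.
    rewrite <- fsum_const. apply fsum_ext. intros. apply Cpow_1_l. }
  assert (HG0 : forall k, (k < m + N)%nat -> k <> m -> G k = RtoC 0).
  { intros k hk hkm. unfold G. apply geom_zero.
    - rewrite <- Cpow_mult_r, Nat.mul_comm, Cpow_mult_r, HwN. apply Cpow_1_l.
    - destruct (Nat.lt_ge_cases (k + (N - m)) N) as [h|h].
      + apply om_pow_ne1; lia.
      + replace (k + (N - m))%nat with (N + (k + (N - m) - N))%nat by lia.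
        rewrite Cpow_add_r, HwN, Cmult_1_l. apply om_pow_ne1; lia. }
  assert (HGb : forall k, Cmod (G k) <= INR N).
  { intro k. unfold G. rewrite <- (Rmult_1_r (INR N)). apply fsum_norm.
    intros j _. rewrite Cmod_pow. unfold w. rewrite Cmod_om_pow, pow1. lra. }
  assert (HTb : Cmod T <= INR N * M).
  { unfold T. apply fsum_norm. intros j _. rewrite Cmod_mult. unfold w at 2.
    rewrite Cmod_om_pow, Rmult_1_r. apply hM. apply Hmodz. }
  set (X := Cmult (Cmult (c m) (Cpow (RtoC r) m)) (RtoC (INR N))).
  assert (HdX : d m = X) by (rewrite Hd, HGm; reflexivity).
  assert (Hinv : forall K, Cmod (Cminus (sum_n d K) (if Nat.leb m K then X else RtoC 0))
                   <= INR N * t ^ N * (1 - t ^ (S K)) / (1 - t)).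
  { set (Bd := fun K => INR N * t ^ N * (1 - t ^ (S K)) / (1 - t)).
    change (forall K, Cmod (Cminus (sum_n d K) (if Nat.leb m K then X else RtoC 0)) <= Bd K).
    assert (Hb0 : forall K, 0 <= Bd K).
    { intro K. unfold Bd. apply Rdiv_le_0_compat; [|lra]. apply Rmult_le_pos.
      apply Rmult_le_pos. lra. apply pow_le; lra.
      assert (t ^ S K <= 1) by (apply powle1; lra). lra. }
    assert (HbS : forall K, Bd (S K) = Bd K + INR N * t ^ N * t ^ (S K)).
    { intro K. unfold Bd. change (t ^ S (S K)) with (t * t ^ (S K)). field. lra. }
    assert (Hext : forall K, 0 <= INR N * t ^ N * t ^ (S K)).
    { intro K. apply Rmult_le_pos. apply Rmult_le_pos. lra. apply pow_le; lra. apply pow_le; lra. }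
    induction K as [|K IH].
    - rewrite sum_O. destruct (Nat.leb_spec m 0) as [h|h].
      + assert (E : d 0%nat = X) by (replace 0%nat with m by lia; exact HdX).
        rewrite E. replace (Cminus X X) with (RtoC 0) by ring. rewrite Cmod_0. apply Hb0.
      + rewrite Hd, HG0 by lia.
        replace (Cminus (Cmult (Cmult (c 0%nat) (Cpow (RtoC r) 0)) (RtoC 0)) (RtoC 0)) with (RtoC 0) by ring.
        rewrite Cmod_0. apply Hb0.
    - rewrite sum_Sn. change (plus (sum_n d K) (d (S K))) with (Cplus (sum_n d K) (d (S K))).
      rewrite HbS.
      destruct (Nat.eq_dec (S K) m) as [e|e].
      + assert (E : d (S K) = X) by (rewrite e; exact HdX).
        rewrite E.
        destruct (Nat.leb_spec m K) as [h|h]; [lia|].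
        destruct (Nat.leb_spec m (S K)) as [h'|h']; [|lia].
        replace (Cminus (Cplus (sum_n d K) X) X) with (Cminus (sum_n d K) (RtoC 0)) by ring.
        specialize (Hext K). lra.
      + destruct (Nat.lt_ge_cases (S K) (m + N)) as [h|h].
        * rewrite Hd, HG0 by lia.
          replace (if Nat.leb m (S K) then X else RtoC 0) with (if Nat.leb m K then X else RtoC 0).
          2:{ destruct (Nat.leb_spec m K); destruct (Nat.leb_spec m (S K)); auto; lia. }
          replace (Cminus (Cplus (sum_n d K) (Cmult (Cmult (c (S K)) (Cpow (RtoC r) (S K))) (RtoC 0)))
             (if Nat.leb m K then X else RtoC 0))
            with (Cminus (sum_n d K) (if Nat.leb m K then X else RtoC 0)) by ring.
          specialize (Hext K). lra.
        * destruct (Nat.leb_spec m K) as [h1|h1]; [|lia].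
          destruct (Nat.leb_spec m (S K)) as [h2|h2]; [|lia].
          replace (Cminus (Cplus (sum_n d K) (d (S K))) X)
            with (Cplus (Cminus (sum_n d K) X) (d (S K))) by ring.
          eapply Rle_trans. apply Cmod_triangle. apply Rplus_le_compat. exact IH.
          rewrite Hd, !Cmod_mult, Cmod_pow, Cmod_R, Rabs_pos_eq by lra.
          specialize (Hterm (S K) ltac:(lia)).
          pose proof (HGb (S K)). pose proof (Cmod_ge_0 (G (S K))).
          assert (0 <= Cmod (c (S K)) * r ^ (S K)).
          { apply Rmult_le_pos. apply Cmod_ge_0. apply pow_le; lra. }
          nra. }
  assert (Hb : forall K, INR N * t ^ N * (1 - t ^ (S K)) / (1 - t) <= INR N * (δ / 2)).
  { intro K.
    assert (0 <= t ^ S K) by (apply pow_le; lra).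
    assert (0 <= t ^ N) by (apply pow_le; lra).
    assert (A : t ^ N * (1 - t ^ S K) / (1 - t) <= δ / 2).
    { apply (Rmult_le_reg_r (1-t)); [lra|]. unfold Rdiv.
      rewrite (Rmult_assoc (t ^ N * (1 - t ^ S K))), Rinv_l by lra. nra. }
    replace (INR N * t ^ N * (1 - t ^ S K) / (1 - t))
      with (INR N * (t ^ N * (1 - t ^ S K) / (1 - t))) by (unfold Rdiv; ring).
    apply Rmult_le_compat_l; lra. }
  unfold is_series in HT.
  assert (He : 0 < δ / 4) by lra.
  destruct (HT _ (locally_ball T (mkposreal _ He))) as [Nf HNf].
  set (K := (Nf + m)%nat).
  pose proof (HNf K ltac:(unfold K; lia)) as H1.
  apply C_NormedModule_mixin_compat2 in H1. simpl in H1.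
  change (Cmod (Cminus (sum_n d K) T) < sqrt 2 * (δ/4)) in H1.
  pose proof (Hinv K) as H2.
  replace (Nat.leb m K) with true in H2 by (symmetry; apply Nat.leb_le; unfold K; lia).
  assert (HX : Cmod X = INR N * (Cmod (c m) * r ^ m)).
  { unfold X. rewrite !Cmod_mult, Cmod_pow, !Cmod_R, !Rabs_pos_eq; try lra; try ring. }
  assert (Htri : Cmod X <= Cmod T + Cmod (Cminus (sum_n d K) T) + Cmod (Cminus (sum_n d K) X)).
  { replace X with (Cplus T (Cplus (Cminus (sum_n d K) T) (Copp (Cminus (sum_n d K) X)))) at 1 by ring.
    eapply Rle_trans. apply Cmod_triangle. eapply Rle_trans. apply Rplus_le_compat_l. apply Cmod_triangle.
    rewrite Cmod_opp. lra. }
  assert (hsq : sqrt 2 < 2).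
  { rewrite <- (sqrt_square 2) at 2 by lra. apply sqrt_lt_1; lra. }
  specialize (Hb K).
  apply (Rmult_le_reg_l (INR N)). lra.
  nra.
Qed.

Lemma T_bound a r z : 0 < a < 1 -> 0 < r < 1 -> Cmod z = r ->
  Cmod (T_aut (RtoC a) z) <= (a + r) / (1 + a * r).
Proof.
  intros ha hr hz. destruct z as [x y].
  unfold Cmod in hz. simpl fst in hz; simpl snd in hz.
  assert (hxy : x ^ 2 + y ^ 2 = r ^ 2).
  { rewrite <- hz. rewrite pow2_sqrt; auto. nra. }
  assert (hx : x <= r) by nra.
  assert (hx' : - r <= x) by nra.
  unfold T_aut.
  assert (Hc : Cconj (RtoC a) = RtoC a).
  { unfold Cconj, RtoC. apply injective_projections; simpl; ring. }
  rewrite Hc.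
  set (B := (1 + 2 * a * x + a ^ 2 * r ^ 2)).
  set (A := (a ^ 2 + 2 * a * x + r ^ 2)).
  assert (HB : 0 < B). { unfold B. assert (0 <= 2 * a * (x + r)) by nra. assert (0 < (1 - a * r) ^ 2) by (apply pow_lt; nra). nra. }
  assert (HdB : Cmod (Cplus (RtoC 1) (Cmult (RtoC a) (x, y))) = sqrt B).
  { unfold Cmod. apply f_equal. simpl. unfold B. rewrite <- hxy. ring. }
  assert (HnA : Cmod (Cplus (RtoC a) (x, y)) = sqrt A).
  { unfold Cmod. apply f_equal. simpl. unfold A. rewrite <- hxy. ring. }
  assert (Hden : Cplus (RtoC 1) (Cmult (RtoC a) (x, y)) <> RtoC 0).
  { intro E. rewrite E, Cmod_0 in HdB. pose proof (sqrt_lt_R0 B HB). lra. }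
  unfold Cdiv. rewrite Cmod_mult, Cmod_inv by exact Hden. rewrite HdB, HnA.
  set (K := (a + r) / (1 + a * r)).
  assert (HK : 0 <= K) by (unfold K; apply Rdiv_le_0_compat; nra).
  assert (HAB : A <= K ^ 2 * B).
  { unfold K. replace (((a + r) / (1 + a * r)) ^ 2 * B) with ((a + r) ^ 2 * B / (1 + a * r) ^ 2)
      by (field; nra).
    apply (Rmult_le_reg_r ((1 + a * r) ^ 2)). nra.
    unfold Rdiv. rewrite Rmult_assoc, Rinv_l by nra. rewrite Rmult_1_r.
    assert (E : (a + r) ^ 2 * B - A * (1 + a * r) ^ 2
              = 2 * a * (r - x) * ((1 - a ^ 2) * (1 - r ^ 2))) by (unfold A, B; ring).
    assert (0 <= 2 * a * (r - x) * ((1 - a ^ 2) * (1 - r ^ 2))).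
    { apply Rmult_le_pos. nra. apply Rmult_le_pos; nra. }
    lra. }
  assert (HsB : 0 < sqrt B) by (apply sqrt_lt_R0; auto).
  assert (sqrt A <= K * sqrt B).
  { rewrite <- (sqrt_pow2 K HK), <- sqrt_mult. apply sqrt_le_1_alt. exact HAB.
    nra. lra. }
  apply (Rmult_le_reg_r (sqrt B)); auto.
  rewrite Rmult_assoc, Rinv_l by lra. lra.
Qed.

Lemma exp_nat n x : exp (INR n * x) = exp x ^ n.
Proof.
  induction n. simpl. rewrite Rmult_0_l. apply exp_0.
  rewrite S_INR, Rmult_plus_distr_r, Rmult_1_l, exp_plus, IHn. simpl. ring.
Qed.

Theorem mainTheorem8 (a : R) (ha0 : 0 < a) (ha1 : a < 1)
  (coef : nat -> nat -> Complex.C)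
  (hcoef : forall n : nat,
     power_series_on_disk (fun m => coef m n)
       (fun z => Cpow (T_aut (RtoC a) z) n)) :
  forall alpha : R, 0 < alpha ->
  exists rho : R, 0 < rho /\
    forall m n : nat,
      Cmod (coef m n) <= exp (- alpha * (rho * INR n - INR m)).
Proof.
  intros alpha halpha.
  set (r := exp (- alpha)).
  assert (hr0 : 0 < r) by apply exp_pos.
  assert (hr1 : r < 1).
  { unfold r. rewrite <- exp_0. apply exp_increasing. lra. }
  set (K := (a + r) / (1 + a * r)).
  assert (hK0 : 0 < K) by (unfold K; apply Rdiv_lt_0_compat; nra).
  assert (hK1 : K < 1).
  { unfold K. apply (Rmult_lt_reg_r (1 + a * r)). nra. unfold Rdiv.
    rewrite Rmult_assoc, Rinv_l by nra. nra. }
  assert (hlnK : ln K < 0).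
  { rewrite <- ln_1. apply ln_increasing; lra. }
  exists (- ln K / alpha). split.
  { apply Rdiv_lt_0_compat; lra. }
  intros m n.
  assert (H := cauchy_est (fun m => coef m n) (fun z => Cpow (T_aut (RtoC a) z) n) (hcoef n)
                 r (K ^ n) hr0 hr1).
  assert (HM : forall z, Cmod z = r -> Cmod (Cpow (T_aut (RtoC a) z) n) <= K ^ n).
  { intros z hz. rewrite Cmod_pow. apply pow_incr. split. apply Cmod_ge_0.
    apply T_bound; auto. }
  specialize (H HM m). simpl in H.
  replace (- alpha * (- ln K / alpha * INR n - INR m))
    with (INR n * ln K + INR m * alpha) by (field; lra).
  rewrite exp_plus, !exp_nat, exp_ln by lra.
  assert (E : r ^ m * exp alpha ^ m = 1).
  { rewrite <- Rpow_mult_distr. unfold r. rewrite <- exp_plus.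
    replace (- alpha + alpha) with 0 by ring. rewrite exp_0. apply pow1. }
  assert (0 < exp alpha ^ m) by (apply pow_lt, exp_pos).
  replace (Cmod (coef m n)) with (Cmod (coef m n) * r ^ m * exp alpha ^ m)
    by (rewrite Rmult_assoc, E; ring).
  apply Rmult_le_compat_r; lra.
Qed.
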